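(* Let $k$ be a field of characteristic $0$, $n\ge 2$, and let $v$ be a discrete valuation of $K_n=k((X_1,\ldots,X_n))$ over $k$ (in the sense of the context) with value group $\mathbb{Z}$. Put $\alpha_i=v(X_i)$ for $i=1,\ldots,n$. Then, by means of a finite number of monoidal transformations (composed with permutations of the variables), one obtains $n$ elements $Y_1,\ldots,Y_n\in\widehat{K}_n$ (the new variables) such that $\hat v(Y_i)=\alpha=\gcd\{\alpha_1,\ldots,\alpha_n\}$ for all $i=1,\ldots,n$.
   Context: $R_n=k[[X_1,\ldots,X_n]]$ with maximal ideal $M_n=(X_1,\ldots,X_n)$ and quotient field $K_n$. A discrete valuation of $K_n\mid k$ means a rank-one discrete valuation $v$ of $K_n$, trivial on $k$, whose center $\mathfrak m_v\cap R_n$ in $R_n$ is $M_n$ (so $v>0$ on $M_n\setminus\{0\}$, $v\ge 0$ on $R_n$). $\widehat K_n$ denotes the completion of $K_n$ with respect to $v$ and $\hat v$ the extension of $v$ to it. A monoidal transformation is the injective homomorphism $k[[X_1,\ldots,X_n]]\to k[[Y_1,\ldots,Y_n]]$, $X_1\mapsto Y_1$, $X_2\mapsto Y_1Y_2$, $X_i\mapsto Y_i$ ($i\ge 3$), applied when $v(X_2)>v(X_1)$ (up to renumbering of variables); the new variables are identified with the elements $Y_1=X_1$, $Y_2=X_2/X_1$, $Y_i=X_i$ of $\widehat K_n$, and the procedure may be iterated. *)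

(* Defs.v *)
From mathcomp Require Import all_boot all_order all_algebra.
From mathcomp Require Import perm.
Set Implicit Arguments. Unset Strict Implicit. Unset Printing Implicit Defensive.
Import Order.TTheory GRing.Theory Num.Theory.
Local Open Scope ring_scope.

Section PowerSeries.
Variables (k : fieldType) (n : nat).

Definition mindex := {ffun 'I_n -> nat}.

(* R_n = k[[X_1,...,X_n]] : a formal power series is its coefficient function *)
Definition ps := mindex -> k.

Definition ps_zero : ps := fun _ => 0.
Definition ps_add (f g : ps) : ps := fun m => f m + g m.
(* Cauchy product: (fg)_m = sum_{a <= m} f_a g_{m-a} *)
Definition ps_mul (f g : ps) : ps := fun m =>
  \sum_(a : {ffun 'I_n -> 'I_((\sum_(i < n) m i).+1)} | [forall i, (a i <= m i)%N])
     f [ffun i => nat_of_ord (a i)] * g [ffun i => (m i - a i)%N].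
Definition ps_const (c : k) : ps := fun m => if m == [ffun => 0%N] then c else 0.
Definition ps_X (i : 'I_n) : ps := fun m => if m == [ffun l => nat_of_bool (l == i)] then 1 else 0.

(* A discrete (rank one, Z-valued) valuation of K_n = Frac(R_n) over k whose
   center on R_n is M_n, given through its (uniquely determining) restriction
   to R_n \ {0}; v(f/g) = v f - v g. *)
Definition center_val (v : ps -> int) : Prop :=
  [/\ (forall f g, f <> ps_zero -> g <> ps_zero -> v (ps_mul f g) = v f + v g),
      (forall f g, f <> ps_zero -> g <> ps_zero -> ps_add f g <> ps_zero ->
          Num.min (v f) (v g) <= v (ps_add f g)),
      (forall c, c != 0 -> v (ps_const c) = 0),
      (forall f, f <> ps_zero -> 0 <= v f) &
      (forall f, f <> ps_zero -> f [ffun => 0%N] = 0 -> 0 < v f)].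

Definition value_group_Z (v : ps -> int) : Prop :=
  forall z : int, exists f g, [/\ f <> ps_zero, g <> ps_zero & z = v f - v g].

(* elements of K_n (inside \hat K_n) represented as fractions num/den *)
Definition frac := (ps * ps)%type.
Definition vhat (v : ps -> int) (y : frac) : int := v y.1 - v y.2.

Definition vars := 'I_n -> frac.

Definition init_vars : vars := fun i => (ps_X i, ps_const 1).

(* monoidal transformation with centre (Y_i, Y_j): Y_j := Y_j / Y_i *)
Definition monoidal (i j : 'I_n) (Y : vars) : vars := fun l =>
  if l == j then (ps_mul (Y j).1 (Y i).2, ps_mul (Y j).2 (Y i).1) else Y l.

Inductive mstep (v : ps -> int) : vars -> vars -> Prop :=
| mstep_perm (s : 'S_n) (Y : vars) : mstep v Y (fun l => Y (s l))
| mstep_monoidal (i j : 'I_n) (Y : vars) :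
    i != j -> vhat v (Y i) < vhat v (Y j) -> mstep v Y (monoidal i j Y).

Inductive reach (v : ps -> int) : vars -> vars -> Prop :=
| reach_refl Y : reach v Y Y
| reach_step Y Z W : mstep v Y Z -> reach v Z W -> reach v Y W.

End PowerSeries.

(* Main.v *)
Require Import Defs.
From mathcomp Require Import all_boot all_order all_algebra.
From mathcomp Require Import perm.
From Stdlib Require Import FunctionalExtensionality.
From mathcomp Require Import zify.
Set Implicit Arguments. Unset Strict Implicit. Unset Printing Implicit Defensive.
Import Order.TTheory GRing.Theory Num.Theory.
Local Open Scope ring_scope.

Section Aux.
Variables (k : fieldType) (n : nat).

Definition mono (a : mindex n) : ps k n := fun m => if m == a then 1 else 0.

Lemma mono_neq0 a : mono a <> @ps_zero k n.
Proof.
move=> H; have := congr1 (fun f => f a) H; rewrite /mono /ps_zero eqxx.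
by move/eqP; rewrite oner_eq0.
Qed.

Definition madd (a b : mindex n) : mindex n := [ffun i => (a i + b i)%N].

Lemma mono_mul a b : ps_mul (mono a) (mono b) = mono (madd a b).
Proof.
apply: functional_extensionality => m; rewrite /ps_mul /mono.
case: eqP => [Hm|Hm].
- have Ha : forall i, (a i < (\sum_(l < n) m l).+1)%N.
    move=> i; rewrite ltnS; apply: (@leq_trans (m i)).
      by rewrite Hm /madd ffunE leq_addr.
    by rewrite (bigD1 i) //= leq_addr.
  pose a0 : {ffun 'I_n -> 'I_((\sum_(l < n) m l).+1)} :=
    [ffun i => Ordinal (Ha i)].
  have Pa0 : [forall i, (a0 i <= m i)%N].
    apply/forallP => i; rewrite ffunE /=.
    have -> : m i = (a i + b i)%N by rewrite Hm ffunE.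
    by rewrite leq_addr.
  rewrite (bigD1 a0) //=.
  have -> : [ffun i => nat_of_ord (a0 i)] = a by apply/ffunP => i; rewrite !ffunE.
  have -> : [ffun i => (m i - a0 i)%N] = b.
    apply/ffunP => i; rewrite !ffunE /=.
    have -> : m i = (a i + b i)%N by rewrite Hm ffunE.
    by rewrite addKn.
  rewrite !eqxx mulr1 big1 ?addr0 // => a' /andP [_ Hne].
  case: eqP => [Ha'|]; last by rewrite mul0r.
  exfalso; move/eqP: Hne; apply; apply/ffunP => i; apply: val_inj.
  by move/ffunP/(_ i): Ha'; rewrite !ffunE /= => ->.
- rewrite big1 // => a' /forallP Hle.
  case: eqP => [Ha'|]; last by rewrite mul0r.
  case: eqP => [Hb'|]; last by rewrite mulr0.
  exfalso; apply: Hm; apply/ffunP => i.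
  move/ffunP/(_ i): Ha'; move/ffunP/(_ i): Hb'.
  rewrite /madd !ffunE => <- <-; rewrite subnKC //; exact: Hle.
Qed.

Definition monv (Y : vars k n) := forall i, exists a b, Y i = (mono a, mono b).

End Aux.

Lemma gcd_dvd_elt (I : eqType) (r : seq I) (F : I -> int) j :
  j \in r -> (\big[gcdz/0]_(l <- r) F l %| F j)%Z.
Proof.
elim: r => [|x r IH] //; rewrite in_cons big_cons.
case/orP => [/eqP ->|Hj]; first exact: dvdz_gcdl.
exact: dvdz_trans (dvdz_gcdr _ _) (IH Hj).
Qed.

Lemma dvd_gcd_all n (F : 'I_n -> int) d :
  (forall j, (d %| F j)%Z) -> (d %| \big[gcdz/0]_(j < n) F j)%Z.
Proof.
move=> H; apply: (big_rec (fun x => (d %| x)%Z)); first exact: dvdz0.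
by move=> i x _ Hx; rewrite dvdz_gcd H.
Qed.

Section Main.
Variables (k : fieldType) (n : nat) (v : ps k n -> int).
Hypothesis Hv : center_val v.

Lemma monv_monoidal i j (Y : vars k n) : monv Y -> monv (monoidal i j Y).
Proof.
move=> HY l; rewrite /monoidal; case: eqP => _; last exact: HY.
have [aj [bj ->]] := HY j; have [ai [bi ->]] := HY i.
by rewrite /= !mono_mul; eexists; eexists.
Qed.

Lemma vhat_monoidal i j (Y : vars k n) : monv Y ->
  vhat v (monoidal i j Y j) = vhat v (Y j) - vhat v (Y i).
Proof.
move=> HY; rewrite /monoidal eqxx /vhat /=.
have [aj [bj ->]] := HY j; have [ai [bi ->]] := HY i.
case: Hv => H _ _ _ _; rewrite !H; try exact: mono_neq0.
rewrite /=; lia.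
Qed.

Definition wsum (Y : vars k n) := \sum_(l < n) vhat v (Y l).

Lemma main_ind (N : nat) (Y : vars k n) :
  monv Y -> (forall i, 0 < vhat v (Y i)) -> wsum Y < N%:Z ->
  exists Z, [/\ reach v Y Z, (forall i j, vhat v (Z i) = vhat v (Z j)),
    (forall i, 0 < vhat v (Z i)) &
    (forall d, (forall i, (d %| vhat v (Y i))%Z) -> forall i, (d %| vhat v (Z i))%Z) /\
    (forall d, (forall i, (d %| vhat v (Z i))%Z) -> forall i, (d %| vhat v (Y i))%Z)].
Proof.
elim: N Y => [|N IH] Y HY Hpos Hs.
  exfalso; move: Hs; rewrite /wsum ltNge sumr_ge0 // => i _; exact: ltW.
case: (boolP [forall i, forall j, vhat v (Y i) == vhat v (Y j)]) => Heq.
  exists Y; split => //.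
  - exact: reach_refl.
  - by move=> i j; move/forallP/(_ i)/forallP/(_ j)/eqP: Heq.
have [i [j Hij]] : exists i j, vhat v (Y i) < vhat v (Y j).
  move/forallPn: Heq => [i /forallPn [j Hne]].
  case: (ltgtP (vhat v (Y i)) (vhat v (Y j))) Hne => // H _; [by exists i, j | by exists j, i].
have Hne : i != j by apply/eqP => E; move: Hij; rewrite E ltxx.
set Y' := monoidal i j Y.
have HY' := monv_monoidal i j HY.
have Hval l : vhat v (Y' l) = if l == j then vhat v (Y j) - vhat v (Y i) else vhat v (Y l).
  case: eqP => [->|/eqP Hl]; first exact: vhat_monoidal.
  by rewrite /Y' /monoidal (negbTE Hl).
have Hpos' l : 0 < vhat v (Y' l).
  by rewrite Hval; case: eqP => _; [rewrite subr_gt0|].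
have Hs' : wsum Y' < N%:Z.
  move: Hs; rewrite /wsum (bigD1 j) //= => Hs; rewrite (bigD1 j) //= Hval eqxx.
  rewrite (eq_bigr (fun l => vhat v (Y l))); last by move=> l /negbTE Hl; rewrite Hval Hl.
  move: Hs (Hpos i); move: (\sum_(l < n | l != j) vhat v (Y l)) => S.
  rewrite -addn1 PoszD; lia.
have [Z [HR Heqz Hposz [H1 H2]]] := IH Y' HY' Hpos' Hs'.
exists Z; split => //.
- apply: reach_step HR; exact: mstep_monoidal.
split.
- move=> d Hd; apply: H1 => l; rewrite Hval; case: eqP => _ //.
  by rewrite rpredB.
- move=> d Hd l; have H := H2 d Hd.
  case: (eqVneq l j) => [->|Hl]; last by have := H l; rewrite Hval (negbTE Hl).
  have := H j; rewrite Hval eqxx => Hj.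
  have -> : vhat v (Y j) = (vhat v (Y j) - vhat v (Y i)) + vhat v (Y i) by rewrite subrK.
  by rewrite rpredD //; have := H i; rewrite Hval (negbTE Hne).
Qed.

End Main.

Theorem lemma2 (k : fieldType) (n : nat) (v : ps k n -> int) :
  [pchar k] =i pred0 ->
  (2 <= n)%N ->
  center_val v ->
  value_group_Z v ->
  exists Y : vars k n,
    reach v (@init_vars k n) Y /\
    forall i : 'I_n, vhat v (Y i) = \big[gcdz/0]_(j < n) v (@ps_X k n j).
Proof.
move=> _ _ Hv _.
set Y0 := @init_vars k n.
have HY0 : monv Y0.
  by move=> i; exists [ffun l => nat_of_bool (l == i)], [ffun => 0%N].
have Hc1 : v (ps_const 1) = 0.
  by case: Hv => _ _ H _ _; apply: H; rewrite oner_neq0.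
have Hval i : vhat v (Y0 i) = v (ps_X k i) by rewrite /vhat /= Hc1 subr0.
have Hpos i : 0 < vhat v (Y0 i).
  rewrite Hval; case: Hv => _ _ _ _ H; apply: H.
    exact: (@mono_neq0 k n [ffun l => nat_of_bool (l == i)]).
  rewrite /ps_X; case: eqP => // /ffunP /(_ i); rewrite !ffunE eqxx //.
have Hs0 : wsum v Y0 < (`|wsum v Y0|.+1)%:Z.
  apply: (le_lt_trans (ler_norm _)); by rewrite -abszE ltz_nat.
have [Z [HR Heqz Hposz [H1 H2]]] :=
  @main_ind k n v Hv `|wsum v Y0|.+1 Y0 HY0 Hpos Hs0.
exists Z; split => // i.
set G := \big[gcdz/0]_(j < n) v (@ps_X k n j).
have HcG : (vhat v (Z i) %| G)%Z.
  apply: dvd_gcd_all => j; rewrite -Hval; apply: H2 => l; by rewrite (Heqz l i).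
have HGc : (G %| vhat v (Z i))%Z.
  apply: H1 => l; rewrite Hval; apply: gcd_dvd_elt; exact: mem_index_enum.
have G0 : 0 <= G by apply: (big_rec (fun x => 0 <= x)) => // *; exact: gcdz_ge0.
have c0 := ltW (Hposz i).
rewrite -(gez0_abs c0) -(gez0_abs G0); apply/eqP; rewrite eqz_nat eqn_dvd.
by apply/andP; split.
Qed.
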